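(* In the colored-tree setting below, for every color $c\in C$ the map $f_c:V\to T_c$ satisfies $\mathcal L(f_c(v),f_c(v'))\le2|vv'|$ for all $v,v'\in V$.
   Context: Let $(Z,d)$ be a bounded metric space with at least two points. Hyperbolic approximation with parameter $r\in(0,1/6]$: $k_0$ is the largest integer with $\operatorname{diam}Z<r^{k_0}$; for each integer $k\ge k_0$, $V_k\subset Z$ is a maximal $r^k$-separated subset; vertex set $V=\bigsqcup_{k\ge k_0}V_k$ (disjoint union) with level $\ell(v)=k$ for $v\in V_k$, open ball $B(v)=\{z:d(z,v)<2r^k\}$, closure $\overline B(v)$; edges join equal-level vertices with $\overline B(v)\cap\overline B(v')\ne\emptyset$ (horizontal) and vertices on adjacent levels whose higher-level ball is contained in the lower-level ball (radial); $|vv'|$ is the path metric with unit edges; the unique vertex of $V_{k_0}$ is the root. Colored-tree setting: assume $\operatorname{cdim}Z=n<\infty$, $r<\min\{\operatorname{diam}Z,1/\operatorname{diam}Z\}$ (so $k_0\in\{0,-1\}$), and $(\mathcal U_j)_{j\ge0}$ is a sequence of open coverings of $Z$, each $\mathcal U_j=\bigcup_{c\in C}\mathcal U_j^c$ with $|C|=n+1$ and each $\mathcal U_j^c$ consisting of pairwise disjoint open sets, such that: (1) $\mathcal U_0^c=\{Z\}$ for all $c$ and $\sup_{U\in\mathcal U_j}\operatorname{diam}U<r^j$ for $j\ge1$; (2) for every $v\in V_{j+1}$, $j\ge0$, some $U\in\mathcal U_j$ contains $B(v)$; (3) for every $c$ and different $U\in\mathcal U_j^c$, $U'\in\mathcal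 U_{j'}^c$ with $j'\le j$, the set $B(U)=\bigcup\{B(v):v\in V_{j+1},B(v)\cap U\ne\emptyset\}$ satisfies $B(U)\subset U'$ or $B(U)\cap U'=\emptyset$. For $c\in C$, $T_c$ is the tree with vertex set $\bigsqcup_{j\ge0}\mathcal U_j^c$ (an element of $\mathcal U_j^c$ is a vertex of level $j$; the element $Z\in\mathcal U_0^c$ is the root $v_c$); a vertex $U'$ of level $j'$ is an ancestor of a vertex $U$ of level $j$ if $j'<j$ and $U\subset U'$; $U$ and $U'$ are joined by an edge iff one is an ancestor of the other and its level is maximal among the levels of ancestors of the other. $\mathcal L$ is the path metric on $T_c$ with unit edges; $T_{c,i}=\mathcal U_i^c$. The map $f_c:V\to T_c$ sends the root of $X$ to $v_c$ and $v\in V_j$, $j>k_0$, to the element $U\in\mathcal U_{j'}^c$ with $B(v)\subset U$ and $j'\le\max\{j-1,0\}$ maximal with this property (well-defined by (3)). *)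

(* Defs.v *)
From Stdlib Require Import Reals ZArith List.
Open Scope R_scope.

Section Metric.
Context {M : Type} (d : M -> M -> R).

Definition is_metric : Prop :=
  (forall x y, 0 <= d x y) /\ (forall x y, d x y = 0 <-> x = y) /\
  (forall x y, d x y = d y x) /\ (forall x y z, d x z <= d x y + d y z).

(* D = diam M = sup of all distances (its existence encodes boundedness) *)
Definition is_diam (D : R) : Prop := is_lub (fun t => exists x y, t = d x y) D.

Definition subset (A B : M -> Prop) : Prop := forall x, A x -> B x.

Definition oball (x : M) (rho : R) : M -> Prop := fun z => d z x < rho.

Definition closure (A : M -> Prop) : M -> Prop :=
  fun z => forall eps, 0 < eps -> exists a, A a /\ d z a < eps.

Definition is_open (U : M -> Prop) : Prop :=
  forall x, U x -> exists eps, 0 < eps /\ forall y, d x y < eps -> U y.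

Definition separated (s : R) (A : M -> Prop) : Prop :=
  forall a b, A a -> A b -> a <> b -> s <= d a b.

Definition max_separated (s : R) (A : M -> Prop) : Prop :=
  separated s A /\ forall B, subset A B -> separated s B -> subset B A.

(* Capacity dimension.  [cdim_prop m]: there is delta > 0 such that for every
   sufficiently small t > 0 there is an open covering of M with mesh <= t,
   multiplicity <= m+1 and Lebesgue number >= delta * t. *)
Definition cdim_prop (m : nat) : Prop :=
  exists delta, 0 < delta /\ exists t0, 0 < t0 /\
  forall t, 0 < t -> t <= t0 ->
  exists F : (M -> Prop) -> Prop,
    (forall U, F U -> is_open U) /\
    (forall x, exists U, F U /\ U x) /\
    (forall U x y, F U -> U x -> U y -> d x y <= t) /\
    (forall x (l : list (M -> Prop)), NoDup l ->
        (forall U, In U l -> F U /\ U x) -> (length l <= S m)%nat) /\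
    (forall x s, s < delta * t -> exists U, F U /\ subset (oball x s) U).

Definition cdim_eq (n : nat) : Prop :=
  cdim_prop n /\ forall m, cdim_prop m -> (n <= m)%nat.

End Metric.

Section HypApprox.
Context {M : Type} (d : M -> M -> R) (Dm r : R) (k0 : Z) (Vs : Z -> M -> Prop).

Definition hyp_approx : Prop :=
  0 < r /\ r <= 1/6 /\
  Dm < powerRZ r k0 /\ (forall k, Dm < powerRZ r k -> (k <= k0)%Z) /\
  (forall k, (k0 <= k)%Z -> max_separated d (powerRZ r k) (Vs k)).

(* vertices of X: pairs (k, v) with k >= k0, v in V_k (disjoint union) *)
Definition xvertex (p : Z * M) : Prop := (k0 <= fst p)%Z /\ Vs (fst p) (snd p).

Definition Bv (p : Z * M) : M -> Prop := oball d (snd p) (2 * powerRZ r (fst p)).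

Definition xedge (p q : Z * M) : Prop :=
  xvertex p /\ xvertex q /\
  ((fst p = fst q /\ p <> q /\
      exists z, closure d (Bv p) z /\ closure d (Bv q) z) \/
   (fst q = fst p + 1 /\ subset (Bv q) (Bv p))%Z \/
   (fst p = fst q + 1 /\ subset (Bv p) (Bv q))%Z).

End HypApprox.

Inductive walk {V : Type} (E : V -> V -> Prop) : nat -> V -> V -> Prop :=
| walk0 : forall u, walk E 0 u u
| walkS : forall n u w x, E u w -> walk E n w x -> walk E (S n) u x.

Definition path_dist {V : Type} (E : V -> V -> Prop) (u w : V) (m : nat) : Prop :=
  walk E m u w /\ forall m', walk E m' u w -> (m <= m')%nat.

Section Colored.
Context {M : Type} (d : M -> M -> R) (r : R) (k0 : Z) (Vs : Z -> M -> Prop)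
        {C : Type} (cov : nat -> C -> (M -> Prop) -> Prop).
(* cov j c U  <->  U is an element of U_j^c *)

Definition vlev (j : nat) : Z := (Z.of_nat j + 1)%Z.

Definition BU (j : nat) (U : M -> Prop) : M -> Prop :=
  fun z => exists v, Vs (vlev j) v /\ (exists y, Bv d r (vlev j, v) y /\ U y) /\
                     Bv d r (vlev j, v) z.

Definition colored_cov : Prop :=
  (forall j c U, cov j c U -> is_open d U) /\
  (forall j x, exists c U, cov j c U /\ U x) /\
  (forall j c U U', cov j c U -> cov j c U' -> U <> U' -> forall x, ~ (U x /\ U' x)) /\
  (forall c U, cov 0%nat c U <-> U = (fun _ => True)) /\
  (forall j, (1 <= j)%nat -> exists s, s < r ^ j /\
       forall c U x y, cov j c U -> U x -> U y -> d x y <= s) /\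
  (forall j v, Vs (vlev j) v -> exists c U, cov j c U /\ subset (Bv d r (vlev j, v)) U) /\
  (forall c j j' U U', cov j c U -> cov j' c U' -> (j' <= j)%nat -> (j, U) <> (j', U') ->
       subset (BU j U) U' \/ (forall x, ~ (BU j U x /\ U' x))).

Definition tvertex (c : C) (a : nat * (M -> Prop)) : Prop := cov (fst a) c (snd a).

Definition ancestor (c : C) (a' a : nat * (M -> Prop)) : Prop :=
  tvertex c a' /\ tvertex c a /\ (fst a' < fst a)%nat /\ subset (snd a) (snd a').

Definition tparent (c : C) (a' a : nat * (M -> Prop)) : Prop :=
  ancestor c a' a /\ forall b, ancestor c b a -> (fst b <= fst a')%nat.

Definition tedge (c : C) (a b : nat * (M -> Prop)) : Prop :=
  tparent c a b \/ tparent c b a.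

(* graph of the map f_c : V -> T_c *)
Definition fc_rel (c : C) (p : Z * M) (a : nat * (M -> Prop)) : Prop :=
  xvertex k0 Vs p /\
  ((fst p = k0 /\ a = (0%nat, fun _ => True)) \/
   ((k0 < fst p)%Z /\ cov (fst a) c (snd a) /\ subset (Bv d r p) (snd a) /\
    (Z.of_nat (fst a) <= Z.max (fst p - 1) 0)%Z /\
    (forall j U, cov j c U -> subset (Bv d r p) U ->
        (Z.of_nat j <= Z.max (fst p - 1) 0)%Z -> (j <= fst a)%nat))).

End Colored.

(* Main.v *)
Require Import Defs.
From Stdlib Require Import Reals ZArith List Lra Lia Classical.
Open Scope R_scope.

Section S.
Variables (r : R).
Hypothesis Hr0 : 0 < r.
Hypothesis Hr6 : r <= 1/6.

Lemma pw_pos k : 0 < powerRZ r k.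
Proof. apply powerRZ_lt; lra. Qed.

Lemma pw_S k : powerRZ r (k+1) = powerRZ r k * r.
Proof. rewrite powerRZ_add by lra. now rewrite powerRZ_1. Qed.

Lemma pw_mono a b : (a <= b)%Z -> powerRZ r b <= powerRZ r a.
Proof.
  intro H. replace b with (a + Z.of_nat (Z.to_nat (b - a)))%Z by lia.
  generalize (Z.to_nat (b-a)); intro n; induction n.
  - simpl. rewrite Z.add_0_r. lra.
  - replace (a + Z.of_nat (S n))%Z with ((a + Z.of_nat n) + 1)%Z by lia.
    rewrite pw_S. pose proof (pw_pos (a + Z.of_nat n)). nra.
Qed.

Lemma pw6 i k : (i + 2 <= k)%Z -> 6 * powerRZ r k <= powerRZ r (i+1).
Proof.
  intro H. pose proof (pw_mono _ _ H). replace (i+2)%Z with ((i+1)+1)%Z in H0 by lia.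
  rewrite pw_S in H0. pose proof (pw_pos (i+1)). nra.
Qed.
End S.

Section G.
Variables (M : Type) (d : M -> M -> R) (r : R) (k0 : Z) (Vs : Z -> M -> Prop)
  (C : Type) (cov : nat -> C -> (M -> Prop) -> Prop) (c : C).
Hypothesis Hd0 : forall x, d x x = 0.
Hypothesis Hsym : forall x y, d x y = d y x.
Hypothesis Htri : forall x y z, d x z <= d x y + d y z.
Hypothesis Hr0 : 0 < r.
Hypothesis Hr6 : r <= 1/6.
Hypothesis Hk0 : (k0 <= 0)%Z.
Hypothesis Hcover : forall k, (0 <= k)%Z -> forall z, exists y, Vs k y /\ d z y < powerRZ r k.
Hypothesis Hdisj : forall j U U', cov j c U -> cov j c U' -> U <> U' -> forall x, ~ (U x /\ U' x).
Hypothesis H0 : forall U, cov 0%nat c U <-> U = (fun _ => True).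
Hypothesis H3 : forall j j' U U', cov j c U -> cov j' c U' -> (j' <= j)%nat -> (j, U) <> (j', U') ->
       subset (BU d r Vs j U) U' \/ (forall x, ~ (BU d r Vs j U x /\ U' x)).

Lemma inBv k v : Bv d r (k, v) v.
Proof. unfold Bv, oball; simpl. rewrite Hd0. pose proof (pw_pos r Hr0 k). lra. Qed.

Lemma L_cov_BU j X : cov j c X -> subset X (BU d r Vs j X).
Proof.
  intros HX z Hz. destruct (Hcover (vlev j) ltac:(unfold vlev; lia) z) as [y [Hy Hzy]].
  exists y. assert (Bv d r (vlev j, y) z).
  { unfold Bv, oball; simpl. pose proof (pw_pos r Hr0 (vlev j)). lra. }
  split; auto. split; auto. exists z; auto.
Qed.

Lemma L_lam i j A X : cov i c A -> cov j c X -> (i < j)%nat ->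
  (exists t, BU d r Vs j X t /\ A t) -> subset (BU d r Vs j X) A.
Proof.
  intros HA HX Hij [t [Ht1 Ht2]].
  destruct (H3 j i X A HX HA ltac:(lia)) as [H|H].
  - intro E. inversion E. lia.
  - exact H.
  - exfalso. apply (H t); auto.
Qed.

Lemma L_anc_meet i j A X : cov i c A -> cov j c X -> (i < j)%nat ->
  (exists t, BU d r Vs j X t /\ A t) -> ancestor cov c (i, A) (j, X).
Proof.
  intros HA HX Hij Ht. pose proof (L_lam _ _ _ _ HA HX Hij Ht).
  unfold ancestor, tvertex; simpl. repeat split; auto.
  intros x Hx. apply H, L_cov_BU; auto.
Qed.

Lemma L_anc_BU l A i X t : ancestor cov c (l, A) (i, X) -> X t -> subset (BU d r Vs i X) A.
Proof.
  intros [HA [HX [Hli Hsub]]] Ht. simpl in *. apply (L_lam l i); auto.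
  exists t. split; auto. apply L_cov_BU; auto.
Qed.

Lemma L_same j U U' t : cov j c U -> cov j c U' -> U t -> U' t -> U = U'.
Proof.
  intros HU HU' Ht Ht'. destruct (classic (U = U')) as [E|E]; auto.
  exfalso. apply (Hdisj j U U' HU HU' E t); auto.
Qed.

Lemma L_same_BU j X A t : cov j c X -> cov j c A -> BU d r Vs j X t -> A t -> X = A.
Proof.
  intros HX HA Ht HAt. destruct (classic (X = A)) as [E|E]; auto. exfalso.
  destruct (H3 j j X A HX HA (le_n _)) as [H|H].
  - intro F. inversion F. auto.
  - destruct Ht as [v [_ [[y0 [_ Hy0]] _]]].
    apply (Hdisj j X A HX HA E y0); split; auto. apply H, L_cov_BU; auto.
  - apply (H t); auto.
Qed.

Lemma L_ball_BU i X y t : cov i c X -> Vs (vlev i) y -> Bv d r (vlev i, y) t -> X t ->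
  subset (Bv d r (vlev i, y)) (BU d r Vs i X).
Proof.
  intros HX Hy Ht HXt z Hz. exists y. split; auto. split; auto. exists t; auto.
Qed.

Lemma big_ball i k : (Z.of_nat i + 2 <= k)%Z -> forall x0, exists y, Vs (vlev i) y /\
  forall z, d z x0 < 6 * powerRZ r k -> Bv d r (vlev i, y) z.
Proof.
  intros Hik x0. destruct (Hcover (vlev i) ltac:(unfold vlev; lia) x0) as [y [Hy Hxy]].
  exists y; split; auto. intros z Hz. unfold Bv, oball; simpl.
  pose proof (pw6 r Hr0 Hr6 (Z.of_nat i) k Hik). unfold vlev in *.
  pose proof (Htri z x0 y). lra.
Qed.

Lemma ball_v k v i : Vs k v -> (Z.of_nat i + 1 <= k)%Z ->
  exists y, Vs (vlev i) y /\ subset (Bv d r (k, v)) (Bv d r (vlev i, y)).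
Proof.
  intros Hv Hik. destruct (Z.eq_dec (Z.of_nat i + 1) k) as [E|E].
  - exists v. unfold vlev. rewrite E. split; auto. intros x Hx; auto.
  - destruct (big_ball i k ltac:(lia) v) as [y [Hy Hb]]. exists y; split; auto.
    intros x Hx. apply Hb. unfold Bv, oball in Hx; simpl in Hx.
    pose proof (pw_pos r Hr0 k). lra.
Qed.

Lemma closure_bound k v z : closure d (Bv d r (k, v)) z -> d v z <= 2 * powerRZ r k.
Proof.
  intro H. apply Rnot_lt_le. intro Hlt.
  destruct (H (d v z - 2 * powerRZ r k) ltac:(lra)) as [a [Ha Hza]].
  unfold Bv, oball in Ha; simpl in Ha. pose proof (Htri v a z) as Ht.
  rewrite (Hsym v a), (Hsym a z) in Ht. lra.
Qed.

Lemma near_z k v z x : closure d (Bv d r (k, v)) z -> Bv d r (k, v) x -> d x z < 6 * powerRZ r k.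
Proof.
  intros Hc Hx. pose proof (closure_bound _ _ _ Hc). unfold Bv, oball in Hx; simpl in Hx.
  pose proof (Htri x v z). pose proof (pw_pos r Hr0 k). lra.
Qed.


Lemma max_nat (Q : nat -> Prop) B a : (forall n, Q n -> (n <= B)%nat) -> Q a ->
  exists m, Q m /\ forall n, Q n -> (n <= m)%nat.
Proof.
  revert Q a. induction B; intros Q a HB Ha.
  - exists a; split; auto. intros n Hn. pose proof (HB n Hn); pose proof (HB a Ha). lia.
  - destruct (classic (Q (S B))) as [HS|HS].
    + exists (S B); split; auto.
    + apply (IHB Q a); auto. intros n Hn. pose proof (HB n Hn).
      destruct (Nat.eq_dec n (S B)); [subst; contradiction|lia].
Qed.

Lemma parent_exists j X : (exists a, ancestor cov c a (j, X)) -> exists P, tparent cov c P (j, X).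
Proof.
  intros [[i A] HA].
  destruct (max_nat (fun i => exists A, ancestor cov c (i, A) (j, X)) j i) as [m [[B HB] Hm]].
  - intros n [A' [_ [_ [H _]]]]. simpl in H. lia.
  - exists A; auto.
  - exists (m, B). split; auto. intros [l A'] Hb. simpl. apply Hm. exists A'; auto.
Qed.

Lemma walk_app {V} (E : V -> V -> Prop) n m a b x : walk E n a b -> walk E m b x -> walk E (n + m) a x.
Proof. induction 1; intros; simpl; auto. econstructor; eauto. Qed.

Lemma walk_rev {V} (E : V -> V -> Prop) : (forall a b, E a b -> E b a) ->
  forall n a b, walk E n a b -> walk E n b a.
Proof.
  intros Hs. induction 1. constructor.
  replace (S n) with (n + 1)%nat by lia. eapply walk_app; eauto.
  econstructor; eauto. constructor.
Qed.

Definition close2 (a b : nat * (M -> Prop)) := exists l, (l <= 2)%nat /\ walk (tedge cov c) l a b.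

Lemma close2_sym a b : close2 a b -> close2 b a.
Proof.
  intros [l [Hl Hw]]. exists l; split; auto. apply walk_rev; auto.
  intros x y [H|H]; [right|left]; auto.
Qed.

Lemma close2_0 a : close2 a a.
Proof. exists 0%nat; split; [lia|constructor]. Qed.

Lemma close2_1 a b : tparent cov c a b -> close2 a b.
Proof. intro H. exists 1%nat; split; auto. econstructor. left; eauto. constructor. Qed.

Lemma close2_2 a b x : tedge cov c a x -> tedge cov c x b -> close2 a b.
Proof. intros H1 H2. exists 2%nat; split; auto. econstructor; eauto. econstructor; eauto. constructor. Qed.

Lemma two_step j U j' U' (S : M -> Prop) s t' :
  cov j c U -> cov j' c U' -> U' t' -> S s -> subset S U ->
  (forall l A, cov l c A -> subset S A -> (l < j')%nat -> (l <= j)%nat) ->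
  ancestor cov c (j, U) (j', U') ->
  (forall i0 P, tparent cov c (i0, P) (j', U') -> (j < i0)%nat -> subset S (BU d r Vs i0 P)) ->
  close2 (j, U) (j', U').
Proof.
  intros HU HU' Ht' Hs HSU Hmax Hanc Hpar.
  destruct (parent_exists j' U' (ex_intro (fun a => ancestor cov c a (j', U')) _ Hanc)) as [[i0 P] Hp].
  pose proof Hp as [HpA Hpm]. pose proof (Hpm _ Hanc) as Hji0. simpl in Hji0.
  destruct HpA as [HP [_ [Hi0 HsubP]]]. simpl in *.
  destruct (Nat.eq_dec j i0) as [E|E].
  - subst i0. assert (P = U) as EP.
    { apply (L_same j P U t'); auto. destruct Hanc as [_ [_ [_ Hs']]]. apply Hs'; auto. }
    subst P. apply close2_1; auto.
  - assert (j < i0)%nat as Hlt by lia.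
    pose proof (Hpar i0 P Hp Hlt) as HSB.
    assert (ancestor cov c (j, U) (i0, P)) as HaP.
    { apply L_anc_meet; auto. exists s; auto. }
    apply (close2_2 _ _ (i0, P)); left; auto.
    split; auto. intros [l A] HlA. simpl.
    pose proof (L_anc_BU l A i0 P t' HlA ltac:(auto)) as HB.
    destruct HlA as [HA [_ [Hl _]]]; simpl in *.
    apply (Hmax l A); auto; [|lia]. intros x Hx; apply HB, HSB; auto.
Qed.


Notation fc := (fc_rel d r k0 Vs cov c).

Lemma radial k v v' j U j' U' : Vs k v -> Vs (k+1)%Z v' -> (k0 <= k)%Z ->
  subset (Bv d r ((k+1)%Z,v')) (Bv d r (k,v)) ->
  fc (k,v) (j,U) -> fc ((k+1)%Z,v') (j',U') -> close2 (j,U) (j',U').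
Proof.
  intros Hv Hv' Hk Hsub [_ Hf] [_ Hf'].
  destruct Hf' as [[E _]|[_ [HU' [HsU' [Hj' Hm']]]]]; simpl in *; [lia|].
  destruct Hf as [[E Ea]|[Hkk [HU [HsU [Hj Hm]]]]]; simpl in *.
  - injection Ea as -> ->. assert (j' = 0%nat) by lia. subst j'.
    apply H0 in HU'. subst U'. apply close2_0.
  - assert (Hjj' : (j <= j')%nat).
    { apply (Hm' j U HU); [intros x Hx; apply HsU, Hsub; auto | lia]. }
    destruct (Nat.eq_dec j j') as [E|E].
    + subst j'. assert (U = U') as EU.
      { apply (L_same j U U' v'); auto. apply HsU, Hsub, inBv. apply HsU', inBv. }
      subst; apply close2_0.
    + apply two_step with (S := Bv d r (k,v)) (s := v) (t' := v'); auto.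
      * apply HsU', inBv.
      * apply inBv.
      * intros l A HA HSA Hl. apply (Hm l A HA HSA). lia.
      * apply L_anc_meet; auto; [lia|]. exists v'. split.
        apply L_cov_BU; auto. apply HsU', inBv. apply HsU, Hsub, inBv.
      * intros i0 P [[HP [_ [Hi0 HPs]]] _] Hji0. simpl in *.
        destruct (ball_v k v i0 Hv ltac:(lia)) as [y [Hy Hby]].
        intros x Hx. apply (L_ball_BU i0 P y v'); auto.
        apply Hby, Hsub, inBv. apply HPs, HsU', inBv.
Qed.

Lemma horiz k v v' z j U j' U' : Vs k v -> Vs k v' -> (k0 <= k)%Z ->
  closure d (Bv d r (k,v)) z -> closure d (Bv d r (k,v')) z ->
  fc (k,v) (j,U) -> fc (k,v') (j',U') -> (j <= j')%nat -> close2 (j,U) (j',U').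
Proof.
  intros Hv Hv' Hk Hc Hc' [_ Hf] [_ Hf'] Hjj'.
  destruct Hf as [[E Ea]|[Hkk [HU [HsU [Hj Hm]]]]]; simpl in *;
  destruct Hf' as [[E' Ea']|[Hkk' [HU' [HsU' [Hj' Hm']]]]]; simpl in *; try lia.
  { rewrite Ea, Ea'. apply close2_0. }
  destruct (Nat.eq_dec j' 0) as [E0|E0].
  { subst j'. assert (j = 0%nat) by lia. subst j. apply H0 in HU. apply H0 in HU'.
    subst. apply close2_0. }
  destruct (Z_le_gt_dec (Z.of_nat j' + 2) k) as [HA|HB].
  - destruct (big_ball j' k HA z) as [y [Hy Hb]].
    assert (HBp : subset (Bv d r (k,v)) (Bv d r (vlev j', y))).
    { intros x Hx; apply Hb; apply (near_z k v z x); auto. }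
    assert (HBq : subset (Bv d r (k,v')) (Bv d r (vlev j', y))).
    { intros x Hx; apply Hb; apply (near_z k v' z x); auto. }
    pose proof (L_ball_BU j' U' y v' HU' Hy (HBq v' (inBv _ _)) (HsU' v' (inBv _ _))) as HBU.
    destruct (Nat.eq_dec j j') as [E|E].
    + subst j'. assert (U' = U) as EU.
      { apply (L_same_BU j U' U v); auto. apply HBU, HBp, inBv. apply HsU, inBv. }
      subst; apply close2_0.
    + apply two_step with (S := Bv d r (k,v)) (s := v) (t' := v'); auto.
      * apply HsU', inBv.
      * apply inBv.
      * intros l A HA' HSA Hl. apply (Hm l A HA' HSA). lia.
      * apply L_anc_meet; auto; [lia|]. exists v. split.
        apply HBU, HBp, inBv. apply HsU, inBv.
      * intros i0 P [Ha _] Hji0. exfalso.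
        pose proof (L_anc_BU i0 P j' U' v' Ha (HsU' v' (inBv _ _))) as HB.
        destruct Ha as [HP [_ [Hi0 _]]]; simpl in *.
        assert (i0 <= j)%nat.
        { apply (Hm i0 P HP); [intros x Hx; apply HB, HBU, HBp; auto | lia]. }
        lia.
  - destruct (Hcover k ltac:(lia) z) as [w [Hw Hzw]].
    destruct (Hc (powerRZ r k) (pw_pos r Hr0 k)) as [a [Ha Hza]].
    destruct (Hc' (powerRZ r k) (pw_pos r Hr0 k)) as [a' [Ha' Hza']].
    assert (Hwa : Bv d r (k,w) a).
    { unfold Bv, oball; simpl. pose proof (Htri a z w). rewrite (Hsym a z) in H. lra. }
    assert (Hwa' : Bv d r (k,w) a').
    { unfold Bv, oball; simpl. pose proof (Htri a' z w). rewrite (Hsym a' z) in H. lra. }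
    assert (Ek : vlev j' = k) by (unfold vlev; lia).
    pose proof (L_ball_BU j' U' w a' HU') as HBw'. rewrite Ek in HBw'.
    specialize (HBw' Hw Hwa' (HsU' a' Ha')).
    destruct (Nat.eq_dec j j') as [E|E].
    + subst j'. pose proof (L_ball_BU j U w a HU) as HBw. rewrite Ek in HBw.
      specialize (HBw Hw Hwa (HsU a Ha)).
      destruct (classic (U = U')) as [EU|EU]; [subst; apply close2_0|].
      destruct (parent_exists j U') as [[i0 P] Hp].
      { exists (0%nat, fun _ => True). repeat split; simpl; auto; [apply H0; auto|lia]. }
      assert (tparent cov c (i0, P) (j, U)).
      { destruct Hp as [HA Hmx].
        pose proof (L_anc_BU _ _ _ _ v' HA (HsU' v' (inBv _ _))) as HBP.
        destruct HA as [HP [_ [Hi0 _]]]. simpl in *. split.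
        - apply L_anc_meet; auto. exists a; split; [apply HBw; auto | apply HBP, HBw'; auto].
        - intros [l A] HlA. simpl. apply (Hmx (l, A)).
          pose proof (L_anc_BU _ _ _ _ v HlA (HsU v (inBv _ _))) as HBA.
          destruct HlA as [HA [_ [Hl _]]]; simpl in *. apply L_anc_meet; auto.
          exists a'; split; [apply HBw'; auto | apply HBA, HBw; auto]. }
      apply (close2_2 _ _ (i0, P)); [right|left]; auto.
    + apply two_step with (S := Bv d r (k,v)) (s := v) (t' := v'); auto.
      * apply HsU', inBv.
      * apply inBv.
      * intros l A HA' HSA Hl. apply (Hm l A HA' HSA). lia.
      * apply L_anc_meet; auto; [lia|]. exists a. split.
        apply HBw'; auto. apply HsU; auto.
      * intros i0 P [HA' _] Hji0. destruct HA' as [HP [_ [Hi0 HPs]]]; simpl in *.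
        destruct (big_ball i0 k ltac:(lia) z) as [y [Hy Hb]].
        intros x Hx. apply (L_ball_BU i0 P y v'); auto.
        apply Hb, (near_z k v' z); auto; apply inBv. apply HPs, HsU', inBv.
        apply Hb, (near_z k v z); auto.
Qed.


Lemma fc_exists p : xvertex k0 Vs p -> exists a, fc p a.
Proof.
  destruct p as [k v]. intros Hx. pose proof Hx as [Hk Hv]; simpl in *.
  destruct (Z.eq_dec k k0) as [E|E].
  - exists (0%nat, fun _ => True). split; auto.
  - destruct (max_nat (fun i => exists A, cov i c A /\ subset (Bv d r (k,v)) A /\
        (Z.of_nat i <= Z.max (k-1) 0)%Z) (Z.to_nat (Z.max (k-1) 0)) 0) as [m [[A [HA [HsA HmA]]] Hm]].
    + intros n [A [_ [_ Hn]]]. lia.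
    + exists (fun _ => True). split; [apply H0; auto|]. split; [intros x _; auto|lia].
    + exists (m, A). split; auto. right; simpl. repeat split; auto; [lia|].
      intros j U HU Hs Hb. apply Hm. exists U; auto.
Qed.

Lemma fc_unique p a b : fc p a -> fc p b -> a = b.
Proof.
  destruct p as [k v], a as [j U], b as [j' U'].
  intros [_ Hf] [_ Hf'].
  destruct Hf as [[E Ea]|[Hkk [HU [HsU [Hj Hm]]]]]; simpl in *;
  destruct Hf' as [[E' Ea']|[Hkk' [HU' [HsU' [Hj' Hm']]]]]; simpl in *; try lia.
  - rewrite Ea, Ea'; auto.
  - assert (j <= j')%nat by (apply (Hm' j U); auto).
    assert (j' <= j)%nat by (apply (Hm j' U'); auto).
    assert (j = j') by lia. subst j'. f_equal.
    apply (L_same j U U' v); auto. apply HsU, inBv. apply HsU', inBv.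
Qed.

Lemma edge_close p q a b : xedge d r k0 Vs p q -> fc p a -> fc q b -> close2 a b.
Proof.
  intros [Hp [Hq H]]. destruct p as [k v], q as [k' v'], a as [j U], b as [j' U'].
  destruct Hp as [Hk Hv], Hq as [Hk' Hv']; simpl in *.
  destruct H as [[E [_ [z [Hz1 Hz2]]]] | [[E Hs]|[E Hs]]]; simpl in *; intros Ha Hb.
  - subst k'. destruct (le_lt_dec j j').
    + apply (horiz k v v' z); auto.
    + apply close2_sym, (horiz k v' v z); auto. lia.
  - subst k'. apply (radial k v v'); auto.
  - subst k. apply close2_sym. apply (radial k' v' v); auto.
Qed.

Lemma main_walk n p q : walk (xedge d r k0 Vs) n p q -> forall a b, fc p a -> fc q b ->
  exists l, (l <= 2 * n)%nat /\ walk (tedge cov c) l a b.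
Proof.
  induction 1; intros a b Ha Hb.
  - rewrite (fc_unique u a b) by auto. exists 0%nat; split; [lia|constructor].
  - destruct (fc_exists w) as [aw Haw]. { destruct H as [_ [Hw _]]; auto. }
    destruct (edge_close u w a aw H Ha Haw) as [l1 [Hl1 W1]].
    destruct (IHwalk aw b Haw Hb) as [l2 [Hl2 W2]].
    exists (l1 + l2)%nat; split; [lia|]. eapply walk_app; eauto.
Qed.

End G.

Theorem lemma6p2 (M : Type) (d : M -> M -> R) (Dm r : R) (k0 : Z)
  (Vs : Z -> M -> Prop) (n : nat) (C : Type) (Cl : list C)
  (cov : nat -> C -> (M -> Prop) -> Prop) :
  is_metric d -> (exists x y : M, x <> y) -> is_diam d Dm ->
  hyp_approx d Dm r k0 Vs ->
  cdim_eq d n ->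
  NoDup Cl -> (forall c, In c Cl) -> length Cl = S n ->
  r < Rmin Dm (/ Dm) ->
  colored_cov d r Vs cov ->
  forall (c : C) (p q : Z * M) (a b : nat * (M -> Prop)) (m m' : nat),
    fc_rel d r k0 Vs cov c p a -> fc_rel d r k0 Vs cov c q b ->
    path_dist (xedge d r k0 Vs) p q m ->
    path_dist (tedge cov c) a b m' ->
    (m' <= 2 * m)%nat.
Proof.
  intros [Hnn [Heq [Hsym Htri]]] _ _ [Hr0 [Hr6 [HDk0 [Hmaxk Hsep]]]] _ _ _ _ Hrm
    [Hopen [Hcovers [Hdisj [H0 [H1 [H2 H3]]]]]] c p q a b m m' Hfa Hfb [Hw _] [_ Hmin].
  assert (Hd0 : forall x, d x x = 0) by (intro x; apply Heq; auto).
  assert (Hk0 : (k0 <= 0)%Z).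
  { destruct (Z_le_gt_dec k0 0) as [H|H]; auto. exfalso.
    pose proof (pw_mono r Hr0 Hr6 1 k0 ltac:(lia)). rewrite powerRZ_1 in H4.
    pose proof (Rmin_l Dm (/ Dm)). lra. }
  assert (Hcover : forall k, (0 <= k)%Z -> forall z, exists y, Vs k y /\ d z y < powerRZ r k).
  { intros k Hk z. destruct (Hsep k ltac:(lia)) as [Hsp Hmx].
    destruct (classic (exists y, Vs k y /\ d z y < powerRZ r k)) as [H|H]; auto. exfalso.
    assert (Vs k z).
    { apply (Hmx (fun x => Vs k x \/ x = z)); [intros x Hx; left; auto| |right; auto].
      intros x y [Hx|Hx] [Hy|Hy] Hxy.
      - apply Hsp; auto.
      - subst y. apply Rnot_lt_le; intro Hl; apply H; exists x; split; auto. rewrite Hsym; auto.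
      - subst x. apply Rnot_lt_le; intro Hl; apply H; exists y; split; auto.
      - subst; contradiction. }
    apply H. exists z. split; auto. rewrite Hd0. apply pw_pos; auto. }
  destruct (main_walk M d r k0 Vs C cov c Hd0 Hsym Htri Hr0 Hr6 Hk0 Hcover
      (fun j => Hdisj j c) (H0 c) (H3 c) m p q Hw a b Hfa Hfb) as [l [Hl Wl]].
  specialize (Hmin l Wl). lia.
Qed.
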